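(* Let $\mathbb{K}$ be a field, let $P_1, P_2 \in \mathbb{K}[X]$ be irreducible, let $n > 1$, and let $f : \mathbb{K}[X]/(P_1) \to \mathbb{K}[X]/(P_2)$ be a ring isomorphism stabilizing $\mathbb{K}$. Then the ring homomorphism $f_{X,n} : \mathbb{K}[X]/(P_1^n) \to \mathbb{K}[X]/(P_2^n)$ is an isomorphism (stabilizing $\mathbb{K}$) if and only if $Q_f' \neq 0$.
   Context: A ring homomorphism $f : A \to B$ between $\mathbb{K}$-algebras stabilizes $\mathbb{K}$ if there is a field automorphism $\sigma_f$ of $\mathbb{K}$ with $f(a) = \sigma_f(a)$ for all $a \in \mathbb{K}$. For a field automorphism $\sigma$ of $\mathbb{K}$, $\sigma^X$ is the ring automorphism of $\mathbb{K}[X]$ applying $\sigma$ to coefficients; $A\circ Q$ denotes $A(Q(X))$; $'$ denotes the formal derivative. For a ring isomorphism $f : \mathbb{K}[X]/(P_1) \to \mathbb{K}[X]/(P_2)$ stabilizing $\mathbb{K}$: $Q_f$ is the unique polynomial of degree $< \deg P_2$ such that $f$ sends the class of $X$ to the class of $Q_f$, and $f_{X,n} : \mathbb{K}[X]/(P_1^n) \to \mathbb{K}[X]/(P_2^n)$ is the well-defined ring homomorphism sending the class of $P$ to the class of $\sigma_f^X(P)\circ Q_f$. *)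

(* Defs.v *)
From HB Require Import structures.
From mathcomp Require Import all_boot all_order all_algebra.
Set Implicit Arguments. Unset Strict Implicit. Unset Printing Implicit Defensive.
Import GRing.Theory.
Local Open Scope ring_scope.

(* The ideal (P) of K[X] equals (P / lead_coef P) for P != 0; mathcomp's
   quotient {poly %/ h} requires a monic h, so we quotient by the monic
   associate of P. *)
Definition monicize (K : fieldType) (P : {poly K}) : {poly K} :=
  (lead_coef P)^-1 *: P.

Notation KXmod P := {poly %/ monicize P}.

Definition cstK (K : fieldType) (P : {poly K}) (a : K) : KXmod P := qpolyC _ a.

Definition ring_iso (A B : comNzRingType) (g : A -> B) : Prop :=
  [/\ zmod_morphism g, monoid_morphism g & bijective g].

Definition field_aut (K : fieldType) (s : K -> K) : Prop :=
  [/\ zmod_morphism s, monoid_morphism s & bijective s].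

Definition stabilizes_via (K : fieldType) (P1 P2 : {poly K})
  (g : KXmod P1 -> KXmod P2) (s : K -> K) : Prop :=
  field_aut s /\ forall a : K, g (cstK P1 a) = cstK P2 (s a).

Definition stabilizes (K : fieldType) (P1 P2 : {poly K})
  (g : KXmod P1 -> KXmod P2) : Prop :=
  exists s : K -> K, stabilizes_via g s.

Definition Qf (K : fieldType) (P1 P2 : {poly K}) (f : KXmod P1 -> KXmod P2)
  : {poly K} := val (f 'qX).

Definition fXn (K : fieldType) (P1 P2 : {poly K}) (n : nat)
  (f : KXmod P1 -> KXmod P2) (s : K -> K)
  (p : KXmod (P1 ^+ n)) : KXmod (P2 ^+ n) :=
  in_qpoly _ ((map_poly s (val p)) \Po Qf f).
Arguments fXn {K P1 P2} n f s p.

(* Main.v *)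
Require Import Defs.
From HB Require Import structures.
From mathcomp Require Import all_boot all_order all_algebra.
From mathcomp Require Import ring zify.
Set Implicit Arguments. Unset Strict Implicit. Unset Printing Implicit Defensive.
Import GRing.Theory.
Local Open Scope ring_scope.
Section Base.
Variable K : fieldType.
Implicit Types P A B : {poly K}.

Lemma monicize_monic P : P != 0 -> monicize P \is monic.
Proof.
move=> P0; rewrite monicE /monicize lead_coefZ mulVf // lead_coef_eq0 //.
Qed.

Lemma size_monicize P : P != 0 -> size (monicize P) = size P.
Proof. by move=> P0; rewrite /monicize size_scale // invr_eq0 lead_coef_eq0. Qed.

Lemma monicize_eqp P : P != 0 -> monicize P %= P.
Proof. by move=> P0; rewrite /monicize eqp_scale // invr_eq0 lead_coef_eq0. Qed.

Lemma mk_monicize P : (1 < size P)%N -> mk_monic (monicize P) = monicize P.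
Proof.
move=> sP; have P0 : P != 0 by rewrite -size_poly_gt0 ltnW.
by rewrite /mk_monic size_monicize // sP monicize_monic.
Qed.

Lemma qval_in P A : (1 < size P)%N ->
  val (in_qpoly (monicize P) A) = A %% monicize P.
Proof.
move=> sP; have P0 : P != 0 by rewrite -size_poly_gt0 ltnW.
by rewrite /= mk_monicize // Pdiv.IdomainMonic.modpE // monicize_monic.
Qed.

Lemma in_qpoly_eq0 P A : (1 < size P)%N ->
  (in_qpoly (monicize P) A = 0) <-> (P %| A).
Proof.
move=> sP; have P0 : P != 0 by rewrite -size_poly_gt0 ltnW.
rewrite -(eqp_dvdl _ (monicize_eqp P0)); split.
  by move/(congr1 val); rewrite qval_in // => /modp_eq0P.
by move=> /modp_eq0P H; apply: val_inj; rewrite qval_in.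
Qed.

Lemma in_qpolyP P A B : (1 < size P)%N ->
  (in_qpoly (monicize P) A = in_qpoly (monicize P) B) <-> (P %| A - B).
Proof.
move=> sP; apply: iff_trans (in_qpoly_eq0 (A - B) sP); rewrite raddfB /=.
split => [->|/eqP]; first by rewrite subrr.
by rewrite subr_eq0 => /eqP.
Qed.

Lemma size_val P (x : KXmod P) : (1 < size P)%N -> (size (val x) < size P)%N.
Proof.
move=> sP; have P0 : P != 0 by rewrite -size_poly_gt0 ltnW.
have E : size (mk_monic (monicize P)) = size P by rewrite mk_monicize // size_monicize.
by rewrite -E; apply: size_mk_monic.
Qed.

Lemma in_qpoly_val P (x : KXmod P) : (1 < size P)%N -> in_qpoly (monicize P) (val x) = x.
Proof. by move=> sP; apply: val_inj; rewrite /= Pdiv.Ring.rmodp_small // size_mk_monic. Qed.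

End Base.
Section Gen.
Variable K : fieldType.
Implicit Types P A B Y Z W : {poly K}.

Lemma in_qpolyC P c : (1 < size P)%N -> in_qpoly (monicize P) c%:P = qpolyC _ c.
Proof.
move=> sP; apply: val_inj; rewrite /= Pdiv.Ring.rmodp_small //.
by rewrite size_polyC (leq_ltn_trans (leq_b1 _)) // size_mk_monic_gt1.
Qed.

Lemma in_qpoly_comp P B Z : (1 < size P)%N ->
  in_qpoly (monicize P) (B \Po Z) =
  (map_poly (qpolyC (monicize P)) B).[in_qpoly (monicize P) Z].
Proof.
move=> sP; rewrite /comp_poly -horner_map /= -map_poly_comp.
by congr (_.[_]); apply: eq_map_poly => c /=; rewrite in_qpolyC.
Qed.

Lemma compD_dvd A Z W : (Z - W) %| ((A \Po Z) - (A \Po W)).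
Proof.
elim/poly_ind: A => [|A c IH]; first by rewrite !comp_poly0 subrr dvdp0.
rewrite !comp_polyD !comp_polyM !comp_polyX !comp_polyC.
have -> : (A \Po Z) * Z + c%:P - ((A \Po W) * W + c%:P) =
   ((A \Po Z) - (A \Po W)) * Z + (A \Po W) * (Z - W) by ring.
by apply: dvdp_add; [apply: dvdp_mulr | apply: dvdp_mull].
Qed.

Lemma taylor2 A Y : Y ^+ 2 %| (A \Po ('X + Y)) - A - Y * A^`().
Proof.
elim/poly_ind: A => [|A c IH]; first by rewrite comp_poly0 deriv0 !subrr mulr0 subrr dvdp0.
rewrite derivMXaddC comp_polyD comp_polyM comp_polyX comp_polyC.
have -> : (A \Po ('X + Y)) * ('X + Y) + c%:P - (A * 'X + c%:P) - Y * (A + A^`() * 'X)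
  = ((A \Po ('X + Y)) - A - Y * A^`()) * ('X + Y) + Y ^+ 2 * A^`() by ring.
by apply: dvdp_add; [apply: dvdp_mulr | apply: dvdp_mulr].
Qed.

Lemma deriv_dvd2 P D : P ^+ 2 %| D -> P %| D^`().
Proof.
case/dvdpP => E ->; rewrite derivM expr2 derivM.
have -> : E^`() * (P * P) + E * (P^`() * P + P * P^`()) =
  (E^`() * P + E * P^`() *+ 2) * P by ring.
exact: dvdp_mull.
Qed.

Lemma irr_coprime P A : irreducible_poly P -> ~~ (P %| A) -> coprimep P A.
Proof.
move=> irrP nPA; rewrite coprimep_def; apply/negPn/negP => g1.
have := irrP.2 _ g1 (dvdp_gcdl P A) => /eqp_dvdl Hg.
by move: (dvdp_gcdr P A); rewrite Hg (negPf nPA).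
Qed.

Lemma irr_prime P A B : irreducible_poly P -> P %| A * B -> P %| A \/ P %| B.
Proof.
move=> irrP H; have [PB|nPB] := boolP (P %| B); first by right.
by left; rewrite -(Gauss_dvdpl _ (irr_coprime irrP nPB)).
Qed.

Lemma size_irr_exp P n : irreducible_poly P -> (0 < n)%N -> (1 < size (P ^+ n))%N.
Proof.
move=> [sP _] n0; have := size_exp P n.
have h : (0 < (size P).-1)%N by rewrite -subn1 subn_gt0.
move=> H; have : (0 < (size (P ^+ n)).-1)%N by rewrite H muln_gt0 h n0.
by rewrite -subn1 subn_gt0.
Qed.

End Gen.
Section Core.
Variable K : fieldType.
Variables P1 P2 : {poly K}.
Hypothesis irr1 : irreducible_poly P1.
Hypothesis irr2 : irreducible_poly P2.
Variable fM : {rmorphism KXmod P1 -> KXmod P2}.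
Hypothesis fbij : bijective fM.
Variables sM tM : {rmorphism K -> K}.
Hypothesis stK : cancel sM tM.
Hypothesis tsK : cancel tM sM.
Hypothesis fst : forall a, fM (cstK P1 a) = cstK P2 (sM a).

Let Q := val (fM 'qX).
Local Notation sg A := (map_poly sM A).
Local Notation tg A := (map_poly tM A).
Let M := sg P1 \Po Q.

Let sP1 : (1 < size P1)%N. Proof. by case: irr1. Qed.
Let sP2 : (1 < size P2)%N. Proof. by case: irr2. Qed.

Lemma F1 A : fM (in_qpoly (monicize P1) A) = in_qpoly (monicize P2) (sg A \Po Q).
Proof.
rewrite -{1}(comp_polyXr A) in_qpoly_comp // -horner_map /= -map_poly_comp.
rewrite in_qpoly_comp // in_qpoly_val // -map_poly_comp; congr (_.[_]).
by apply: eq_map_poly => c /=; rewrite -[qpolyC _ c]/(cstK P1 c) fst.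
Qed.

Lemma L_m : P2 %| M.
Proof.
apply/(in_qpoly_eq0 _ sP2); rewrite -F1.
have -> : in_qpoly (monicize P1) P1 = 0 by apply/(in_qpoly_eq0 _ sP1); rewrite dvdpp.
by rewrite rmorph0.
Qed.

Lemma L_inj A : P2 %| sg A \Po Q -> P1 %| A.
Proof.
move=> /(in_qpoly_eq0 _ sP2); rewrite -F1 -(rmorph0 fM) => /(bij_inj fbij).
by move/(in_qpoly_eq0 _ sP1).
Qed.

Lemma L_surj B : exists A, P2 %| (sg A \Po Q) - B.
Proof.
case: fbij => g fg gf; exists (val (g (in_qpoly (monicize P2) B))).
apply/(in_qpolyP _ _ sP2); rewrite -F1 in_qpoly_val // gf //.
Qed.

Lemma size_Q : (size Q < size P2)%N.
Proof. exact: size_val. Qed.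


Lemma tsP A : sg (tg A) = A.
Proof. exact: (map_polyK tsK (rmorph0 sM)). Qed.
Lemma stP A : tg (sg A) = A.
Proof. exact: (map_polyK stK (rmorph0 tM)). Qed.

Lemma comp_X_dvd (P Z : {poly K}) : P %| Z - 'X -> forall A, P %| (A \Po Z) - A.
Proof.
move=> PZ A; rewrite -{2}(comp_polyXr A); exact: dvdp_trans PZ (compD_dvd _ _ _).
Qed.

Lemma B1 : Q^`() != 0 -> ~~ (P2 ^+ 2 %| M).
Proof.
move=> Q'0; apply/negP => H2.
have P10 : P1 != 0 by apply: irredp_neq0.
have P20 : P2 != 0 by apply: irredp_neq0.
have P1d : P1^`() = 0.
  have := deriv_dvd2 H2; rewrite /M deriv_comp deriv_map => /(irr_prime irr2) [H|H].
    have := L_inj H; case: (eqVneq P1^`() 0) => // nz /(dvdp_leq nz).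
    have := lt_size_deriv P10; move=> a b; have := leq_ltn_trans b a; by rewrite ltnn.
  have Q0 : Q != 0 by apply: contraNneq Q'0 => ->; rewrite deriv0.
  have := dvdp_leq Q'0 H; have := lt_size_deriv Q0; have := size_Q => a b c.
  have := leq_ltn_trans c (ltn_trans b a); by rewrite ltnn.
have [c Hc] := L_surj 'X.
pose h := tg Q \Po c.
have hX : P1 %| h - 'X.
  apply: L_inj; rewrite rmorphB /= map_polyX map_comp_poly tsP comp_polyB comp_polyX.
  by rewrite -comp_polyA; apply: comp_X_dvd.
case/dvdpP: hX => V hV.
have hE : h = 'X + V * P1 by rewrite -hV addrC subrK.
have T : P1 ^+ 2 %| (P1 \Po h) - P1.
  have := taylor2 P1 (V * P1); rewrite -hE P1d mulr0 subr0.
  by apply: dvdp_trans; rewrite exprMn dvdp_mull.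
have T2 : P1 ^+ 2 %| P1 \Po h.
  have -> : P1 \Po h = tg M \Po c.
    by rewrite /h comp_polyA /M map_comp_poly stP.
  case/dvdpP: H2 => E ->; rewrite rmorphM rmorphXn /= rmorphM rmorphXn /=.
  apply: dvdp_mull; apply: dvdp_exp2r; apply: L_inj.
  rewrite map_comp_poly tsP -comp_polyA.
  have := comp_X_dvd Hc P2; move/dvdp_add => /(_ P2 (dvdpp _)); by rewrite subrK.
have : P1 ^+ 2 %| P1 by rewrite -(dvdp_subr _ T2).
move/(dvdp_leq P10); have := size_exp P1 2; have := sP1.
move: (size P1) => k; move: (size (P1 ^+ 2)) => m.
case: k => [|k] //; case: m => [|m] /=; lia.
Qed.

Variable n : nat.
Hypothesis n1 : (1 < n)%N.
Let sPn1 : (1 < size (P1 ^+ n))%N. Proof. by apply: size_irr_exp => //; lia. Qed.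
Let sPn2 : (1 < size (P2 ^+ n))%N. Proof. by apply: size_irr_exp => //; lia. Qed.

Local Notation F := (fXn n fM sM).

Lemma FE p : F p = in_qpoly (monicize (P2 ^+ n)) (sg (val p) \Po Q).
Proof. by []. Qed.

Lemma WD A B : P1 ^+ n %| A - B -> P2 ^+ n %| (sg A \Po Q) - (sg B \Po Q).
Proof.
case/dvdpP => E h; rewrite -comp_polyB -rmorphB h rmorphM rmorphXn /= comp_polyM rmorphXn /=.
by apply: dvdp_mull; apply: dvdp_exp2r; apply: L_m.
Qed.

Lemma F_zmod : zmod_morphism F.
Proof.
move=> x y; rewrite !FE.
have -> : val (x - y) = val x - val y by [].
by rewrite rmorphB comp_polyB raddfB.
Qed.

Lemma F_monoid : monoid_morphism F.
Proof.
split.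
  rewrite FE; have -> : val (1 : KXmod (P1 ^+ n)) = 1 by [].
  by rewrite rmorph1 comp_polyC rmorph1.
move=> x y; rewrite !FE -rmorphM /= -comp_polyM -rmorphM.
apply: (proj2 (in_qpolyP _ _ sPn2)); apply: WD; apply: (proj1 (in_qpolyP _ _ sPn1)).
by rewrite -[Pdiv.CommonRing.rmodp _ _]/(val (x * y)) in_qpoly_val // rmorphM /= !in_qpoly_val.
Qed.

Lemma F_stab a : F (cstK (P1 ^+ n) a) = cstK (P2 ^+ n) (sM a).
Proof.
rewrite FE; have -> : val (cstK (P1 ^+ n) a) = a%:P by [].
by rewrite map_polyC comp_polyC in_qpolyC.
Qed.


Lemma forward : Q^`() = 0 -> ~ (forall y, exists p, F p = y).
Proof.
move=> Q0 Hs; have [p hp] := Hs ('qX).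
move: hp; rewrite FE => /(in_qpolyP _ _ sPn2) H.
have H2 : P2 ^+ 2 %| (sg (val p) \Po Q) - 'X.
  by apply: dvdp_trans H; apply: dvdp_exp2l; lia.
move: (deriv_dvd2 H2); rewrite derivB deriv_comp Q0 mulr0 derivX sub0r dvdpNr dvdp1.
by case: irr2 => s _; move/eqP => e; move: s; rewrite e.
Qed.

Lemma coprime_H H : M = H * P2 -> ~~ (P2 ^+ 2 %| M) -> coprimep P2 H.
Proof.
move=> MH nd; apply: irr_coprime => //; apply: contra nd; rewrite MH => /dvdpP [E ->].
by rewrite -mulrA -expr2 dvdp_mull.
Qed.

Lemma layers H V : M = H * P2 -> P2 %| V * H - 1 ->
  forall k B, exists A, P2 ^+ k %| B - (sg A \Po Q).
Proof.
move=> MH VH; elim => [|k IH] B; first by exists 0; rewrite expr0 dvd1p.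
have [A /dvdpP [T hT]] := IH B.
have [D hD] := L_surj (V ^+ k * T).
exists (A + P1 ^+ k * D).
rewrite rmorphD rmorphM rmorphXn /= comp_polyD comp_polyM rmorphXn /= -/M MH.
have -> : B - ((sg A \Po Q) + (H * P2) ^+ k * (sg D \Po Q)) =
  P2 ^+ k * (T * (1 - (V * H) ^+ k) - H ^+ k * ((sg D \Po Q) - V ^+ k * T)).
  have -> : B = (B - (sg A \Po Q)) + (sg A \Po Q) by rewrite subrK.
  rewrite hT !exprMn; move: (P2 ^+ k) (H ^+ k) (V ^+ k) => a b c; ring.
rewrite exprSr dvdp_mul2l ?expf_neq0 ?irredp_neq0 //.
apply: dvdp_sub; last by apply: dvdp_mull.
apply: dvdp_mull; rewrite -dvdpNr opprB.
have := subrXX (V * H) 1 k; rewrite expr1n => ->.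
exact: dvdp_mulr.
Qed.

Lemma inj_layers H : M = H * P2 -> coprimep P2 H ->
  forall A k, (k <= n)%N -> P2 ^+ n %| sg A \Po Q -> P1 ^+ k %| A.
Proof.
move=> MH cH A; elim => [|k IH] kn HA; first by rewrite expr0 dvd1p.
have /dvdpP [E hE] := IH (ltnW kn) HA.
move: HA; rewrite hE rmorphM rmorphXn /= comp_polyM rmorphXn /= -/M MH exprMn.
move=> HA.
have : P2 ^+ k.+1 %| (sg E \Po Q) * H ^+ k * P2 ^+ k.
  by rewrite -mulrA; apply: (dvdp_trans _ HA); apply: dvdp_exp2l.
rewrite exprS dvdp_mul2r ?expf_neq0 ?irredp_neq0 //.
rewrite Gauss_dvdpl ?coprimep_expr // => /L_inj H1.
by rewrite exprS dvdp_mul2r ?expf_neq0 ?irredp_neq0.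
Qed.


Lemma backward : Q^`() != 0 -> bijective F.
Proof.
move=> Q'0; have nd := B1 Q'0.
have [H MH] : exists H, M = H * P2 by apply/dvdpP; apply: L_m.
have cH := coprime_H MH nd.
have [[U V] /= hUV] := Bezout_eq1_coprimepP P2 H cH.
have VH : P2 %| V * H - 1.
  have -> : V * H - 1 = - (U * P2) by rewrite -hUV; ring.
  by rewrite dvdpNr dvdp_mull.
have surj : forall y, exists p, F p == y.
  move=> y; have [A hA] := layers MH VH n (val y).
  exists (in_qpoly (monicize (P1 ^+ n)) A); apply/eqP.
  rewrite FE -[RHS](in_qpoly_val y sPn2); apply: (proj2 (in_qpolyP _ _ sPn2)).
  have hp : P1 ^+ n %| val (in_qpoly (monicize (P1 ^+ n)) A) - A.
    by apply: (proj1 (in_qpolyP _ _ sPn1)); rewrite in_qpoly_val.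
  have := dvdp_sub (WD hp) hA.
  by rewrite opprB addrA subrK.
have inj : injective F.
  move=> x y Fxy; rewrite -(in_qpoly_val x sPn1) -(in_qpoly_val y sPn1).
  apply: (proj2 (in_qpolyP _ _ sPn1)); apply: (inj_layers MH cH (leqnn n)).
  rewrite rmorphB comp_polyB; apply: (proj1 (in_qpolyP _ _ sPn2)).
  by rewrite -!FE.
exists (fun y => xchoose (surj y)) => [x|y]; last exact/eqP/(xchooseP (surj y)).
by apply: inj; apply/eqP/(xchooseP (surj (F x))).
Qed.

End Core.
Theorem mainTheorem13 (K : fieldType) (P1 P2 : {poly K}) (n : nat)
  (f : KXmod P1 -> KXmod P2) (s : K -> K) :
  irreducible_poly P1 -> irreducible_poly P2 -> (1 < n)%N ->
  ring_iso f -> stabilizes_via f s ->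
  (ring_iso (fXn n f s) /\ stabilizes (fXn n f s)) <-> (Qf f)^`() != 0.
Proof.
move=> irr1 irr2 n1 [fz fm fb] [[sz sm sb] fst].
pose fM : {rmorphism KXmod P1 -> KXmod P2} :=
  HB.pack f (GRing.isZmodMorphism.Build _ _ f fz) (GRing.isMonoidMorphism.Build _ _ f fm).
pose sM : {rmorphism K -> K} :=
  HB.pack s (GRing.isZmodMorphism.Build _ _ s sz) (GRing.isMonoidMorphism.Build _ _ s sm).
case: sb => t st ts.
have tz : zmod_morphism t.
  by move=> a b; apply: (can_inj st); rewrite sz !ts.
have tm : monoid_morphism t.
  split; first by apply: (can_inj st); rewrite ts sm.1.
  by move=> a b; apply: (can_inj st); rewrite sm.2 !ts.
pose tM : {rmorphism K -> K} :=
  HB.pack t (GRing.isZmodMorphism.Build _ _ t tz) (GRing.isMonoidMorphism.Build _ _ t tm).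
have fbM : bijective fM by [].
have fstM : forall a, fM (cstK P1 a) = cstK P2 (sM a) by [].
change (fXn n f s) with (fXn n fM sM); change (Qf f) with (val (fM 'qX)).
split.
  move=> [[_ _ Fb] _]; apply/eqP => Q0.
  apply: (forward irr1 irr2 (fM := fM) (sM := sM) n1 Q0).
  by move=> y; case: Fb => g _ gK; exists (g y).
move=> Q'0; split.
  split; [exact: F_zmod | exact: F_monoid | exact: (backward irr1 irr2 fbM (tM := tM))].
exists s; split; first by split => //; exists t.
exact: F_stab.
Qed.
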